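(* Let $k>0$ be an integer (in canonical form) and let $G\cong\{a\mid b\}$ where $a$, $b$, $G$ are numbers. If $b-G\le 1$ and, for $i=1,\dots,k$, $\alpha_i>0$ is the least integer such that $2^{-\alpha_i}<b-G-\sum_{j=1}^{i-1}2^{-\alpha_j}$, then \[G\mathbin{:}k=G+\sum_{i=1}^k\frac{1}{2^{\alpha_i}}.\] Similarly, if $G-a\le 1$ and, for $i=1,\dots,k$, $\beta_i$ is the least integer such that $2^{-\beta_i}<G-a-\sum_{j=1}^{i-1}2^{-\beta_j}$, then \[G\mathbin{:}(-k)=G-\sum_{i=1}^k\frac{1}{2^{\beta_i}}.\]
   Context: Games are short normal-play combinatorial games, written $\{L\mid R\}$; a number is a game with $G^L<G<G^R$ for all options, with values identified with dyadic rationals. Canonical integers: $n\cong\{n-1\mid\}$ for $n>0$, $n\cong\{\mid n+1\}$ for $n<0$, $0\cong\{\mid\}$. The ordinal sum is $G\mathbin{:}H\cong\{L(G),\,G\mathbin{:}L(H)\mid R(G),\,G\mathbin{:}R(H)\}$. *)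

(* Defs.v *)
From mathcomp Require Import all_boot.
Set Implicit Arguments. Unset Strict Implicit. Unset Printing Implicit Defensive.

Inductive game : Type := Game : seq game -> seq game -> game.

Definition leftopts (g : game) := let: Game l _ := g in l.
Definition rightopts (g : game) := let: Game _ r := g in r.

Fixpoint gsize (g : game) : nat :=
  let: Game l r := g in (sumn (map gsize l) + sumn (map gsize r)).+1.

(* Defined by recursion on a fuel bounding gsize G + gsize H; the
   fuel gsize G + gsize H given in [gle] below is always sufficient (every
   recursive call strictly decreases the size sum, which stays >= 2), so the
   dummy base case is never reached. *)
Fixpoint le_fuel (n : nat) (g h : game) : bool :=
  match n with
  | 0 => true
  | n'.+1 =>
    ~~ has (fun hr => le_fuel n' hr g) (rightopts h) &&
    ~~ has (fun gl => le_fuel n' h gl) (leftopts g)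
  end.

Definition gle (g h : game) : bool := le_fuel (gsize g + gsize h) g h.
Definition glt (g h : game) : bool := gle g h && ~~ gle h g.
Definition game_eq (g h : game) : bool := gle g h && gle h g.

Fixpoint neg (g : game) : game :=
  let: Game l r := g in Game (map neg r) (map neg l).

Fixpoint add (g h : game) : game :=
  let: Game gl gr := g in
  let fix addg (h : game) : game :=
    let: Game hl hr := h in
    Game (map (fun x => add x h) gl ++ map addg hl)
         (map (fun x => add x h) gr ++ map addg hr)
  in addg h.

Definition zero : game := Game [::] [::].

Definition gsum (s : seq game) : game := foldr add zero s.

Fixpoint osum (g h : game) : game :=
  let: Game hl hr := h in
  Game (leftopts g ++ map (osum g) hl) (rightopts g ++ map (osum g) hr).

Fixpoint posint (n : nat) : game :=
  if n is m.+1 then Game [:: posint m] [::] else zero.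
Fixpoint negint (n : nat) : game :=
  if n is m.+1 then Game [::] [:: negint m] else zero.

Fixpoint pinv2 (n : nat) : game :=
  if n is m.+1 then Game [:: zero] [:: pinv2 m] else Game [:: zero] [::].

Fixpoint is_number (g : game) : bool :=
  let: Game l r := g in
  all is_number l && all is_number r &&
  all (fun x => glt x g) l && all (fun y => glt g y) r.

Definition partial_pinv (e : nat -> nat) (i : nat) : game :=
  gsum [seq pinv2 (e j) | j <- iota 1 i.-1].

(* Main.v *)
From Pilot Require Import Defs.
From mathcomp Require Import all_boot all_order all_algebra.
From mathcomp Require Import ring lra zify.
From Stdlib Require Import Classical ClassicalEpsilon.
Import Pilot.Defs.
Set Implicit Arguments. Unset Strict Implicit. Unset Printing Implicit Defensive.
Import Order.TTheory GRing.Theory Num.Theory.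
Open Scope ring_scope.

Definition p2 (n : nat) : rat := 2%:R ^+ n.
Definition w (n : nat) : rat := (p2 n)^-1.
Definition dy (e : nat) (x : rat) := exists z : int, x * p2 e = z%:~R.
Definition exact e x := dy e x /\ ((0 < e)%N -> ~ dy e.-1 x).
Definition xl e (x : rat) : option rat :=
  if (0 < e)%N || (0 < x) then Some (x - w e) else None.
Definition xr e (x : rat) : option rat :=
  if (0 < e)%N || (x < 0) then Some (x + w e) else None.
Definition lcond (o : option rat) L := if o is Some u then has (fun l => u <= l) L else true.
Definition rcond (o : option rat) R := if o is Some u then has (fun r => r <= u) R else true.
Definition Cl x e L R := [/\ exact e x, all (fun l => l < x) L, all (fun r => x < r) R,
   lcond (xl e x) L & rcond (xr e x) R].

Lemma p2_gt0 n : 0 < p2 n. Proof. by rewrite /p2 exprn_gt0. Qed.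
Lemma p2S n : p2 n.+1 = 2 * p2 n. Proof. by rewrite /p2 exprS. Qed.
Lemma p20 : p2 0 = 1. Proof. by []. Qed.
Lemma w_gt0 n : 0 < w n. Proof. by rewrite /w invr_gt0 p2_gt0. Qed.
Lemma wK n : w n * p2 n = 1. Proof. by rewrite /w mulVf // gt_eqF ?p2_gt0. Qed.
Lemma wS n : w n.+1 = w n / 2.
Proof. by rewrite /w p2S invfM mulrC. Qed.
Lemma w0 : w 0 = 1. Proof. by rewrite /w p20 invr1. Qed.
Lemma p2_le m n : (m <= n)%N -> p2 m <= p2 n.
Proof.
elim: n => [|n IH]; first by rewrite leqn0 => /eqP->.
rewrite leq_eqVlt => /orP[/eqP->//|]; rewrite ltnS => /IH h.
rewrite p2S; have := p2_gt0 n; lra.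
Qed.
Lemma w_le m n : (m <= n)%N -> w n <= w m.
Proof. move=> h; rewrite /w lef_pV2 ?posrE ?p2_gt0 //; exact: p2_le. Qed.
Lemma w_lt m n : (m < n)%N -> w n < w m.
Proof. move=> h; have := w_le h; rewrite wS; have := w_gt0 m; lra. Qed.
Lemma w_ltE m n : (w n < w m) = (m < n)%N.
Proof.
case: (ltnP m n) => h; first by rewrite w_lt.
by apply/negbTE; rewrite -leNgt w_le.
Qed.

Lemma dyS e x : dy e x -> dy e.+1 x.
Proof. case=> z h; exists (z * 2); rewrite p2S mulrCA h rmorphM /=; ring. Qed.
Lemma dy_le e e' x : (e <= e')%N -> dy e x -> dy e' x.
Proof.
elim: e' => [|e' IH]; first by rewrite leqn0 => /eqP->.
rewrite leq_eqVlt => /orP[/eqP->//|]; rewrite ltnS => /IH h /h; exact: dyS.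
Qed.
Lemma dyD e x y : dy e x -> dy e y -> dy e (x + y).
Proof. case=> a ha [b hb]; exists (a + b); by rewrite mulrDl ha hb rmorphD. Qed.
Lemma dyN e x : dy e x -> dy e (- x).
Proof. case=> a ha; exists (- a); by rewrite mulNr ha rmorphN. Qed.
Lemma dyNE e x : dy e (- x) <-> dy e x.
Proof. split; last exact: dyN. by move/dyN; rewrite opprK. Qed.
Lemma dy_w e : dy e (w e). Proof. exists 1; by rewrite wK. Qed.
Lemma dy_int e (z : int) : dy e z%:~R.
Proof.
elim: e => [|e IH]; first by exists z; rewrite p20 mulr1.
exact: dyS.
Qed.
Lemma ndy_wS e : ~ dy e (w e.+1).
Proof.
case=> z; rewrite wS -mulrA mulrC -mulrA (mulrC (p2 e)) wK mulr1 => h.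
have h1 : (0 : rat) < z%:~R by rewrite -h; lra.
have h2 : (z%:~R : rat) < 1 by rewrite -h; lra.
rewrite ltr0z in h1; rewrite ltrz1 in h2; lia.
Qed.

Lemma dy_gap e x y : dy e x -> dy e y -> x < y -> x + w e <= y.
Proof.
case=> a ha [b hb] lt.
have hp := p2_gt0 e.
have : a%:~R < b%:~R :> rat by rewrite -ha -hb ltr_pM2r.
rewrite ltr_int => ab.
have ab' : (a + 1)%:~R <= b%:~R :> rat by rewrite ler_int; lia.
rewrite -(ler_pM2r hp) mulrDl wK hb ha; move: ab'; rewrite rmorphD /=; lra.
Qed.

Lemma exists_exact n x : dy n x -> exists e, (e <= n)%N /\ exact e x.
Proof.
elim: n => [|n IH] h; first by exists 0%N; split => //.
case: (classic (dy n x)) => [/IH [e [he ex]]|nd].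
  by exists e; split => //; apply: leqW.
by exists n.+1; split => //.
Qed.


Lemma lemT x y ex ey : exact ex x -> exact ey y -> x < y ->
  (forall u, xr ex x = Some u -> y < u) -> exists2 u, xl ey y = Some u & x <= u.
Proof.
move=> [dx _] [dy' _] lt hr.
suff [dyx pos] : dy ey x /\ ((0 < ey)%N || (0 < y)).
  exists (y - w ey); first by rewrite /xl pos.
  have := dy_gap dyx dy' lt; lra.
move: hr; rewrite /xr; case: ifP => [_ /(_ _ erefl) hu|].
  case: (leqP ey ex) => h.
    have := dy_gap dx (dy_le h dy') lt; lra.
  split; first exact: dy_le (ltnW h) dx.
  by rewrite (leq_ltn_trans _ h).
move/negbT; rewrite negb_or -leqNgt leqn0 -leNgt => /andP[/eqP e0 x0] _.
split; first by apply: dy_le dx; rewrite e0.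
apply/orP; right; exact: le_lt_trans lt.
Qed.

Lemma core x y ex ey L1 R1 L2 R2 : x < y -> Cl x ex L1 R1 -> all (fun r => y < r) R1 ->
  Cl y ey L2 R2 -> all (fun l => l < x) L2 -> False.
Proof.
move=> lt [ex1 _ _ _ rc1] aR1 [ey2 _ _ lc2 _] aL2.
have [u hu xu] : exists2 u, xl ey y = Some u & x <= u.
  apply: lemT ex1 ey2 lt _ => u hu; move: rc1; rewrite hu => /hasP [r rR ru].
  move/allP: aR1 => /(_ r rR) yr; exact: lt_le_trans yr ru.
move: lc2; rewrite hu => /hasP [l lL ul].
move/allP: aL2 => /(_ l lL) lx.
have := le_lt_trans ul lx; have := xu; lra.
Qed.

Lemma Cl_uniq x y ex ey L R : Cl x ex L R -> Cl y ey L R -> x = y.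
Proof.
move=> cx cy.
case: (ltgtP x y) => // h.
- by exfalso; apply: (core h cx _ cy); [case: cy | case: cx].
- by exfalso; apply: (core h cy _ cx); [case: cx | case: cy].
Qed.

Lemma key_le x ex L1 R1 y ey L2 R2 : Cl x ex L1 R1 -> Cl y ey L2 R2 ->
  (~~ has (fun r => r <= x) R2 && ~~ has (fun l => y <= l) L1) = (x <= y).
Proof.
move=> cx cy; apply/idP/idP.
  case/andP => /hasPn h1 /hasPn h2.
  rewrite leNgt; apply/negP => lt.
  apply: (core lt cy _ cx).
    by apply/allP => r /h1; rewrite -ltNge.
  by apply/allP => l /h2; rewrite -ltNge.
move=> le; case: cx cy => _ aL1 _ _ _ [_ _ aR2 _ _].
apply/andP; split; apply/hasPn.
  move=> r /(allP aR2) yr; rewrite -ltNge; exact: le_lt_trans yr.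
move=> l /(allP aL1) lx; rewrite -ltNge; exact: lt_le_trans le.
Qed.

Lemma exactN e x : exact e (- x) <-> exact e x.
Proof. by rewrite /exact dyNE; split=> [][h1 h2]; split=> // /h2; rewrite dyNE. Qed.

Lemma ClN x e L R : Cl x e L R -> Cl (- x) e (map -%R R) (map -%R L).
Proof.
case=> ex aL aR lc rc; split.
- by rewrite exactN.
- by rewrite all_map; apply/allP => r /(allP aR) /=; rewrite ltrN2.
- by rewrite all_map; apply/allP => l /(allP aL) /=; rewrite ltrN2.
- move: rc; rewrite /xl /xr oppr_gt0; case: ifP => //= _ /hasP [r rR ru].
  apply/hasP; exists (- r); first exact: map_f.
  by rewrite -opprB opprK lerN2 addrC.
- move: lc; rewrite /xl /xr.
  have -> : (- x < 0) = (0 < x) by rewrite oppr_lt0.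
  case: ifP => //= _ /hasP [l lL ul].
  apply/hasP; exists (- l); first exact: map_f.
  lra.
Qed.

Lemma ClNE x e L R : Cl (- x) e (map -%R R) (map -%R L) -> Cl x e L R.
Proof. by move/ClN; rewrite opprK !mapK //; exact: opprK. Qed.


Ltac sif := match goal with |- (if ?c then _ else _) = _ => suff -> : c = true by [] end.
Ltac sif2 := sif; rewrite ?orbT ?orTb //; try (apply/orP; (by left) || (right; lra)); try lra.

Lemma xlS e (x : rat) : (0 < e)%N || (0 < x) -> xl e x = Some (x - w e).
Proof. by rewrite /xl => ->. Qed.
Lemma xrS e (x : rat) : (0 < e)%N || (x < 0) -> xr e x = Some (x + w e).
Proof. by rewrite /xr => ->. Qed.

Lemma xl_add e ex ey (x y wv : rat) : (e <= maxn ex ey)%N -> xl e (x + y) = Some wv ->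
  (exists2 u, xl ex x = Some u & wv <= u + y) \/ (exists2 u, xl ey y = Some u & wv <= x + u).
Proof.
rewrite /xl => hm.
case: ifP => // h0 [<-].
case: (leqP ex ey) => hxy.
  have hm' : (e <= ey)%N by move: hm; rewrite (maxn_idPr hxy).
  case: (posnP ey) => [ey0|eyp].
    have ex0 : ex = 0%N by move: hxy; rewrite ey0 leqn0 => /eqP.
    have e0 : e = 0%N by move: hm'; rewrite ey0 leqn0 => /eqP.
    move: h0; rewrite e0 /= => h0.
    case: (ltrP 0 x) => hx.
left; exists (x - w ex); first by sif2.
      by rewrite ex0; lra.
    have hy : 0 < y by lra.
    right; exists (y - w ey); first by sif2.
    rewrite ey0; lra.
  right; exists (y - w ey); first by [].
  have := w_le hm'; lra.
have hm' : (e <= ex)%N by move: hm; rewrite (maxn_idPl (ltnW hxy)).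
have exp : (0 < ex)%N := leq_ltn_trans (leq0n _) hxy.
left; exists (x - w ex); first by sif2.
have := w_le hm'; lra.
Qed.

Lemma xr_add e ex ey (x y wv : rat) : (e <= maxn ex ey)%N -> xr e (x + y) = Some wv ->
  (exists2 u, xr ex x = Some u & u + y <= wv) \/ (exists2 u, xr ey y = Some u & x + u <= wv).
Proof.
rewrite /xr => hm.
case: ifP => // h0 [<-].
case: (leqP ex ey) => hxy.
  have hm' : (e <= ey)%N by move: hm; rewrite (maxn_idPr hxy).
  case: (posnP ey) => [ey0|eyp].
    have ex0 : ex = 0%N by move: hxy; rewrite ey0 leqn0 => /eqP.
    have e0 : e = 0%N by move: hm'; rewrite ey0 leqn0 => /eqP.
    move: h0; rewrite e0 /= => h0.
    case: (ltrP x 0) => hx.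
left; exists (x + w ex); first by sif2.
      by rewrite ex0; lra.
    right; exists (y + w ey); first by sif2.
    rewrite ey0; lra.
  right; exists (y + w ey); first by sif2.
  have := w_le hm'; lra.
have hm' : (e <= ex)%N by move: hm; rewrite (maxn_idPl (ltnW hxy)).
have exp : (0 < ex)%N := leq_ltn_trans (leq0n _) hxy.
left; exists (x + w ex); first by sif2.
have := w_le hm'; lra.
Qed.

Lemma Cl_add (x : rat) ex L1 R1 (y : rat) ey L2 R2 : Cl x ex L1 R1 -> Cl y ey L2 R2 ->
  exists e, Cl (x + y) e ([seq l + y | l <- L1] ++ [seq x + l | l <- L2])
                         ([seq r + y | r <- R1] ++ [seq x + r | r <- R2]).
Proof.
move=> [[dx _] aL1 aR1 lc1 rc1] [[dy' _] aL2 aR2 lc2 rc2].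
have dxy : dy (maxn ex ey) (x + y).
  apply: dyD; [apply: dy_le dx; exact: leq_maxl | apply: dy_le dy'; exact: leq_maxr].
have [e [he exy]] := exists_exact dxy.
exists e; split => //.
- rewrite all_cat !all_map; apply/andP; split; apply/allP.
    by move=> l /(allP aL1) /=; lra.
  by move=> l /(allP aL2) /=; lra.
- rewrite all_cat !all_map; apply/andP; split; apply/allP.
    by move=> l /(allP aR1) /=; lra.
  by move=> l /(allP aR2) /=; lra.
- rewrite /lcond; case hxl: (xl e (x + y)) => [wv|] //.
  rewrite has_cat !has_map; apply/orP.
  case: (xl_add he hxl) => [[u hu hwu]|[u hu hwu]].
    left; move: lc1; rewrite hu => /hasP [l lL ul]; apply/hasP; exists l => //=; lra.
  right; move: lc2; rewrite hu => /hasP [l lL ul]; apply/hasP; exists l => //=; lra.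
- rewrite /rcond; case hxr: (xr e (x + y)) => [wv|] //.
  rewrite has_cat !has_map; apply/orP.
  case: (xr_add he hxr) => [[u hu hwu]|[u hu hwu]].
    left; move: rc1; rewrite hu => /hasP [l lL ul]; apply/hasP; exists l => //=; lra.
  right; move: rc2; rewrite hu => /hasP [l lL ul]; apply/hasP; exists l => //=; lra.
Qed.


Lemma max_exists (L : seq rat) l0 : l0 \in L -> exists2 l, l \in L & all (fun x => x <= l) L.
Proof.
elim: L l0 => // a L IH l0 _.
case: L IH => [|b L] IH.
  by exists a; rewrite ?mem_head //= lexx.
have [l lL al] := IH b (mem_head b L).
case: (leP a l) => h.
  exists l; first by rewrite inE lL orbT.
  by apply/andP; split; [exact: h | exact: al].
exists a; first by rewrite mem_head.
apply/allP => x; rewrite inE => /orP [/eqP ->|hx]; first exact: lexx.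
have := allP al x hx => /= xl; exact: (le_trans xl (ltW h)).
Qed.

Lemma exists_e (l : rat) R : all (fun r => l < r) R -> exists e, all (fun r => l + w e < r) R.
Proof.
elim: R => [|r R IH] /=; first by exists 0%N.
case/andP => lr /IH [e1 h1].
have [d dE] : {d : rat | d = r - l} by exists (r - l).
have dp : 0 < d by rewrite dE; lra.
have hb := upper_nthrootP (leqnn (Num.bound d^-1)).
move: (Num.bound d^-1) hb => e2 hb.
have he2 : w e2 < d.
  rewrite -(ltr_pM2r (p2_gt0 e2)) wK.
  have : d * d^-1 < d * 2 ^+ e2 by rewrite ltr_pM2l.
  by rewrite mulfV ?gt_eqF // /p2 mulrC.
exists (maxn e1 e2); apply/andP; split.
  have := w_le (leq_maxr e1 e2); rewrite dE in he2; lra.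
apply/allP => x /(allP h1) hx; have := w_le (leq_maxl e1 e2); lra.
Qed.

Definition cc (l : rat) e : rat := (Num.floor (l * p2 e) + 1)%:~R / p2 e.

Lemma ccE l e : cc l e * p2 e = (Num.floor (l * p2 e) + 1)%:~R.
Proof. by rewrite /cc mulfVK // gt_eqF ?p2_gt0. Qed.

Lemma cc_gt l e : l < cc l e.
Proof. by rewrite -(ltr_pM2r (p2_gt0 e)) ccE floorD1_gt. Qed.

Lemma cc_le l e : cc l e <= l + w e.
Proof.
rewrite -(ler_pM2r (p2_gt0 e)) ccE mulrDl wK rmorphD /=.
have := floor_le (l * p2 e); lra.
Qed.

Lemma cc_min l e y : dy e y -> l < y -> cc l e <= y.
Proof.
case=> z hz ly.
rewrite -(ler_pM2r (p2_gt0 e)) ccE hz ler_int.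
have : l * p2 e < z%:~R by rewrite -hz ltr_pM2r ?p2_gt0.
rewrite -floor_lt_int => h; rewrite lezD1; exact: h.
Qed.

Lemma dy_cc l e : dy e (cc l e).
Proof. by exists (Num.floor (l * p2 e) + 1); rewrite ccE. Qed.

Lemma cc_step l e : cc l e <= cc l e.+1 + w e.+1.
Proof.
rewrite -(ler_pM2r (p2_gt0 e.+1)) mulrDl wK ccE.
rewrite p2S mulrCA ccE mulrCA.
have hb : 2 * Num.floor (l * p2 e) <= Num.floor (2 * (l * p2 e)).
  rewrite floor_ge_int rmorphM /=.
  have := floor_le (l * p2 e); lra.
have : (2 * Num.floor (l * p2 e))%:~R <= (Num.floor (2 * (l * p2 e)))%:~R :> rat
  by rewrite ler_int.
rewrite !rmorphD !rmorphM /=; lra.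
Qed.

Lemma xrNone e (x : rat) : ~~ (0 < e)%N -> 0 <= x -> xr e x = None.
Proof. by rewrite /xr => /negbTE -> hx; rewrite ltNge hx. Qed.

Lemma pos_exists L R l : l \in L -> all (fun x => x <= l) L -> 0 <= l ->
  all (fun r => l < r) R -> exists x e, Cl x e L R.
Proof.
move=> lL aL l0 aR.
pose Q e := all (fun r => cc l e < r) R.
have exQ : exists e, Q e.
  have [e he] := exists_e aR; exists e; apply/allP => r /(allP he) hr.
  have := cc_le l e; lra.
case: (ex_minnP exQ) => e Qe mn.
have xgt := cc_gt l e.
have aLx : all (fun l' => l' < cc l e) L.
  by apply/allP => l' /(allP aL) hl'; lra.
exists (cc l e), e.
case: e Qe mn xgt aLx => [|e] Qe mn xgt aLx.
  split => //.
  - by split => //; exact: dy_cc.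
  - rewrite xlS; last by apply/orP; right; lra.
    apply/hasP; exists l => //; have := cc_le l 0; rewrite w0; lra.
  - by rewrite xrNone //; lra.
have nQ : ~~ Q e by apply/negP => /mn; rewrite ltnn.
split => //.
- split; first exact: dy_cc.
  move=> _ /= de; move/negP: nQ; apply.
  apply/allP => r /(allP Qe) hr.
  have := cc_min de xgt; lra.
- rewrite xlS //; apply/hasP; exists l => //.
  rewrite -(ler_pM2r (p2_gt0 e.+1)) mulrBl wK ccE rmorphD /=.
  have := floor_le (l * p2 e.+1); lra.
- rewrite xrS //; move: nQ; rewrite /Q -has_predC => /hasP [r rR /= hr].
  apply/hasP; exists r => //; have := cc_step l e; rewrite leNgt; lra.
Qed.

Lemma Cl_exists L R : all (fun l => all (fun r => l < r) R) L -> exists x e, Cl x e L R.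
Proof.
move=> cr.
case hA: (all (fun l => l < 0) L && all (fun r => 0 < r) R).
  case/andP: hA => aL aR; exists 0, 0%N; split => //. all: try (split => //; exists 0; by rewrite mul0r).
have pos : forall L R, all (fun l => all (fun r => l < r) R) L ->
    has (fun l => 0 <= l) L -> exists x e, Cl x e L R.
  move=> L' R' cr' /hasP [l0 l0L hl0].
  have [l lL al] := max_exists l0L.
  apply: (pos_exists lL al).
    have := allP al l0 l0L => /= h; lra.
  exact: (allP cr' l lL).
move/negbT: hA; rewrite negb_and -!has_predC => /orP [hL|hR].
  apply: pos cr _; apply: sub_has hL => l /=; rewrite -leNgt; exact.
have h1 : all (fun l => all (fun r => l < r) (map -%R L)) (map -%R R).
  rewrite all_map; apply/allP => r rR /=; rewrite all_map; apply/allP => l lL /=.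
  have := allP (allP cr l lL) r rR => /= h; lra.
have h2 : has (fun l => 0 <= l) (map -%R R).
  rewrite has_map; apply: sub_has hR => r /=; rewrite -leNgt => h; lra.
have [x [e c]] := pos _ _ h1 h2.
exists (-x), e; apply: ClNE; rewrite opprK; exact c.
Qed.


Lemma base_inv (A B x : rat) e : Cl x e [:: A] [:: B] -> B - x <= 1 ->
  [/\ exists D, dy D x /\ B - x <= w D, A < x & x < B].
Proof.
case=> [[dx _] aL aR _ rc] h.
split.
- exists e; split => //.
  case: (posnP e) => [->|ep]; first by rewrite w0.
  move: rc; rewrite xrS ?ep //= orbF => hb; lra.
- by move: aL => /= /andP [].
- by move: aR => /= /andP [].
Qed.

Lemma step (A B y : rat) D al : A < y -> y < B -> dy D y -> B - y <= w D -> w al < B - y ->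
  ((0 < al.-1)%N -> ~ (w al.-1 < B - y)) ->
  [/\ Cl (y + w al) al [:: A; y] [:: B], dy al (y + w al), B - (y + w al) <= w al,
      A < y + w al & y + w al < B].
Proof.
move=> Ay yB dD hD hal hmin.
have Dal : (D < al)%N by rewrite -w_ltE; lra.
case: al Dal hal hmin => [//|al] Dal hal hmin.
rewrite /= in hmin.
have Dal0 : (D <= al)%N by [].
have dal : dy al y := dy_le Dal0 dD.
have hb : B - y <= w al.
  case: (posnP al) => [a0|ap].
    have D0 : D = 0%N by move: Dal; rewrite a0; case: D {dD hD Dal0 dal}.
    by move: hD; rewrite D0 a0.
  by rewrite leNgt; apply/negP => /hmin; apply.
have wS' := wS al.
have wp := w_gt0 al.+1.
split.
- split.
  + split; first by apply: dyD; [exact: dyS | exact: dy_w].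
    move=> _ /= h; apply: (@ndy_wS al).
    have := dyD h (dyN dal); by have -> : y + w al.+1 - y = w al.+1 by ring.
  + by rewrite /=; apply/andP; split; [lra | apply/andP; split => //; lra].
  + by rewrite /= andbT; lra.
  + rewrite xlS //= orbF; apply/orP; right; lra.
  + rewrite xrS //= orbF; lra.
- by apply: dyD; [exact: dyS | exact: dy_w].
- lra.
- lra.
- lra.
Qed.


Definition cross (L R : seq rat) := all (fun l => all (fun r => l < r) R) L.

Definition simp (L R : seq rat) : rat :=
  epsilon (inhabits 0) (fun x => exists e, Cl x e L R).

Lemma simpP L R : cross L R -> exists e, Cl (simp L R) e L R.
Proof.
move=> cr; rewrite /simp; apply: (epsilon_spec (inhabits (0:rat)) (fun x => exists e, Cl x e L R)).
have [x [e c]] := Cl_exists cr; by exists x, e.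
Qed.

Lemma Cl_cross x e L R : Cl x e L R -> cross L R.
Proof.
case=> _ aL aR _ _; apply/allP => l /(allP aL) lx; apply/allP => r /(allP aR) xr'.
exact: lt_trans xr'.
Qed.

Fixpoint v (g : game) : rat := let: Game l r := g in simp (map v l) (map v r).

Fixpoint vnum (g : game) : bool :=
  let: Game l r := g in [&& all vnum l, all vnum r & cross (map v l) (map v r)].

Lemma vE l r : v (Game l r) = simp (map v l) (map v r). Proof. by []. Qed.
Lemma vnumE l r : vnum (Game l r) = [&& all vnum l, all vnum r & cross (map v l) (map v r)].
Proof. by []. Qed.

Lemma vnumCl l r : vnum (Game l r) -> exists e, Cl (v (Game l r)) e (map v l) (map v r).
Proof. by rewrite vnumE vE => /and3P [_ _ /simpP]. Qed.

Lemma Cl_v l r x e : all vnum l -> all vnum r -> Cl x e (map v l) (map v r) ->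
  vnum (Game l r) /\ v (Game l r) = x.
Proof.
move=> al ar c; have cr := Cl_cross c.
split; first by rewrite vnumE al ar cr.
have [e' c'] := simpP cr; rewrite vE; exact: Cl_uniq c' c.
Qed.

Lemma all_In T (p : pred T) (s : seq T) : all p s <-> (forall x, List.In x s -> p x).
Proof.
elim: s => [|a s IH] /=; first by split.
split.
  by case/andP => pa /IH h x [<-|/h].
move=> h; apply/andP; split; first by apply: h; left.
by apply/IH => x hx; apply: h; right.
Qed.

Lemma has_In T (p : pred T) (s : seq T) : has p s <-> (exists x, List.In x s /\ p x).
Proof.
elim: s => [|a s IH] /=; first by split => // [[x []]].
split.
  case/orP => [pa|/IH [x [hx px]]]; first by exists a; split => //; left.
  by exists x; split => //; right.
case=> x [[<-|hx] px]; first by rewrite px.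
by apply/orP; right; apply/IH; exists x.
Qed.

Lemma eq_has_In T (p q : pred T) (s : seq T) : (forall x, List.In x s -> p x = q x) ->
  has p s = has q s.
Proof.
elim: s => [|a s IH] //= h; rewrite h; last by left.
by rewrite IH // => x hx; apply: h; right.
Qed.

Lemma eq_all_In T (p q : pred T) (s : seq T) : (forall x, List.In x s -> p x = q x) ->
  all p s = all q s.
Proof.
elim: s => [|a s IH] //= h; rewrite h; last by left.
by rewrite IH // => x hx; apply: h; right.
Qed.

Lemma eq_map_In T U (f g : T -> U) (s : seq T) : (forall x, List.In x s -> f x = g x) ->
  map f s = map g s.
Proof.
elim: s => [|a s IH] //= h; rewrite h; last by left.
by rewrite IH // => x hx; apply: h; right.
Qed.

Lemma In_size x l : List.In x l -> (gsize x <= sumn (map gsize l))%N.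
Proof.
elim: l => [|a l IH] //= [<-|/IH h]; first exact: leq_addr.
exact: leq_trans h (leq_addl _ _).
Qed.

Lemma gsize_gt0 g : (0 < gsize g)%N. Proof. by case: g. Qed.

Lemma In_sizeL x l r : List.In x l -> (gsize x < gsize (Game l r))%N.
Proof. move/In_size => h /=; lia. Qed.
Lemma In_sizeR x l r : List.In x r -> (gsize x < gsize (Game l r))%N.
Proof. move/In_size => h /=; lia. Qed.

Lemma game_ind' (P : game -> Prop) :
  (forall l r, (forall x, List.In x l -> P x) -> (forall x, List.In x r -> P x) -> P (Game l r)) ->
  forall g, P g.
Proof.
move=> H g; suff: forall n g, (gsize g <= n)%N -> P g by apply; exact: leqnn.
elim=> [|n IH] [l r] hs; first by move: hs; rewrite leqn0 gt_eqF ?gsize_gt0.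
apply: H => x hx; apply: IH.
  by have := In_sizeL r hx; lia.
by have := In_sizeR l hx; lia.
Qed.

Lemma le_fuel_stable n m g h : (gsize g + gsize h <= n)%N -> (gsize g + gsize h <= m)%N ->
  le_fuel n g h = le_fuel m g h.
Proof.
elim: n m g h => [|n IH] m g h hn hm.
  by move: hn; have := gsize_gt0 g; lia.
case: m hm => [|m] hm; first by move: hm; have := gsize_gt0 g; lia.
case: g hn hm => gl gr; case: h => hl hr hn hm /=.
congr (~~ _ && ~~ _); apply: eq_has_In => x hx; apply: IH.
- by have := In_sizeR hl hx; lia.
- by have := In_sizeR hl hx; lia.
- by have := In_sizeL gr hx; lia.
- by have := In_sizeL gr hx; lia.
Qed.

Lemma gleE g h : gle g h =
  ~~ has (fun hr => gle hr g) (rightopts h) && ~~ has (fun gl => gle h gl) (leftopts g).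
Proof.
rewrite /gle.
have [n hn] : exists n, (gsize g + gsize h = n.+1)%N.
  by exists (gsize g + gsize h).-1; have := gsize_gt0 g; lia.
rewrite hn; case: g hn => gl gr; case: h => hl hr hn; rewrite [LHS]/=.
congr (~~ _ && ~~ _); apply: eq_has_In => x hx; rewrite /gle; apply: le_fuel_stable => //.
- by have := In_sizeR hl hx; lia.
- by have := In_sizeL gr hx; lia.
Qed.


Lemma all_vnum_In s : all vnum s -> forall x, List.In x s -> vnum x.
Proof. by move/all_In. Qed.

Lemma gle_v g h : vnum g -> vnum h -> gle g h = (v g <= v h).
Proof.
move: {2}(gsize g + gsize h)%N (leqnn (gsize g + gsize h)) => n.
elim: n g h => [|n IH] g h hs vg vh.
  by move: hs; have := gsize_gt0 g; lia.
case: g hs vg vh => gl gr; case: h => hl hr hs vg vh.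
have [e1 c1] := vnumCl vg; have [e2 c2] := vnumCl vh.
move: (vg) (vh); rewrite !vnumE => /and3P [vgl vgr _] /and3P [vhl vhr _].
rewrite gleE /=.
rewrite (eq_has_In (q := fun x => v x <= v (Game gl gr))); last first.
  move=> x hx; apply: IH => //; last exact: all_vnum_In vhr x hx.
  by have := In_sizeR hl hx; lia.
rewrite (eq_has_In (s := gl) (q := fun x => v (Game hl hr) <= v x)); last first.
  move=> x hx; apply: IH => //; last exact: all_vnum_In vgl x hx.
  by have := In_sizeL gr hx; lia.
have := key_le c1 c2; rewrite !has_map; exact.
Qed.

Lemma glt_v g h : vnum g -> vnum h -> glt g h = (v g < v h).
Proof.
move=> vg vh; rewrite /glt !gle_v // -ltNge.
by apply/idP/idP => [/andP[]//|h']; rewrite h' ltW.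
Qed.

Lemma geq_v g h : vnum g -> vnum h -> game_eq g h = (v g == v h).
Proof. by move=> vg vh; rewrite /game_eq !gle_v // -eq_le. Qed.

Lemma crossE l r : cross (map v l) (map v r) <->
  (forall x y, List.In x l -> List.In y r -> v x < v y).
Proof.
rewrite /cross all_map; split.
  move/all_In => h x y hx hy; have := h x hx; rewrite /= all_map => /all_In; apply.
  exact hy.
move=> h; apply/all_In => x hx /=; rewrite all_map; apply/all_In => y hy; exact: h.
Qed.

Lemma numE g : is_number g = vnum g.
Proof.
elim/game_ind': g => l r IHl IHr.
rewrite /= -/(vnum (Game l r)) vnumE.
rewrite (eq_all_In IHl) (eq_all_In IHr).
case al: (all vnum l) => //=; case ar: (all vnum r) => //=.
apply/idP/idP.
  case/andP => _ h2; apply/crossE => x y hx hy.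
  have := (all_In _ _).1 h2 y hy; rewrite /glt => /andP [+ _].
  rewrite gleE /= => /andP [_ /negP hn].
  rewrite ltNge -gle_v; [|exact: all_vnum_In ar y hy|exact: all_vnum_In al x hx].
  by apply/negP => hyx; apply: hn; apply/has_In; exists x.
move=> cr; have vg : vnum (Game l r) by rewrite vnumE al ar cr.
have [e [_ aL aR _ _]] := vnumCl vg.
apply/andP; split; apply/all_In => x hx; rewrite glt_v //.
- by move: aL; rewrite all_map => /all_In; apply.
- exact: all_vnum_In al x hx.
- by move: aR; rewrite all_map => /all_In; apply.
- exact: all_vnum_In ar x hx.
Qed.


Lemma addE gl gr hl hr : add (Game gl gr) (Game hl hr) =
  Game (map (fun x => add x (Game hl hr)) gl ++ map (add (Game gl gr)) hl)
       (map (fun x => add x (Game hl hr)) gr ++ map (add (Game gl gr)) hr).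
Proof. by []. Qed.

Lemma add_v g h : vnum g -> vnum h -> vnum (add g h) /\ v (add g h) = v g + v h.
Proof.
move: {2}(gsize g + gsize h)%N (leqnn (gsize g + gsize h)) => n.
elim: n g h => [|n IH] g h hs vg vh.
  by move: hs; have := gsize_gt0 g; lia.
case: g hs vg vh => gl gr; case: h => hl hr hs vg vh.
have [e1 c1] := vnumCl vg; have [e2 c2] := vnumCl vh.
move: (vg) (vh); rewrite !vnumE => /and3P [vgl vgr _] /and3P [vhl vhr _].
have IHg : forall x, List.In x (gl ++ gr) -> vnum (add x (Game hl hr)) /\
    v (add x (Game hl hr)) = v x + v (Game hl hr).
  move=> x hx0; have hx := List.in_app_or _ _ _ hx0; apply: IH => //.
  - by case: hx => hx; [have := In_sizeL gr hx | have := In_sizeR gl hx]; lia.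
  - by case: hx => hx; [exact: all_vnum_In vgl x hx | exact: all_vnum_In vgr x hx].
have IHh : forall x, List.In x (hl ++ hr) -> vnum (add (Game gl gr) x) /\
    v (add (Game gl gr) x) = v (Game gl gr) + v x.
  move=> x hx0; have hx := List.in_app_or _ _ _ hx0; apply: IH => //.
  - by case: hx => hx; [have := In_sizeL hr hx | have := In_sizeR hl hx]; lia.
  - by case: hx => hx; [exact: all_vnum_In vhl x hx | exact: all_vnum_In vhr x hx].
have [e c] := Cl_add c1 c2.
rewrite addE; apply: Cl_v.
- rewrite all_cat; apply/andP; split; apply/all_In => x /List.in_map_iff [y [<- hy]].
    by apply: (IHg y _).1; apply: List.in_or_app; left.
  by apply: (IHh y _).1; apply: List.in_or_app; left.
- rewrite all_cat; apply/andP; split; apply/all_In => x /List.in_map_iff [y [<- hy]].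
    by apply: (IHg y _).1; apply: List.in_or_app; right.
  by apply: (IHh y _).1; apply: List.in_or_app; right.
- rewrite !map_cat -!map_comp.
  rewrite (eq_map_In (s := gl) (g := fun x => v x + v (Game hl hr))); last first.
    by move=> x hx; apply: (IHg x _).2; apply: List.in_or_app; left.
  rewrite (eq_map_In (s := hl) (g := fun x => v (Game gl gr) + v x)); last first.
    by move=> x hx; apply: (IHh x _).2; apply: List.in_or_app; left.
  rewrite (eq_map_In (s := gr) (g := fun x => v x + v (Game hl hr))); last first.
    by move=> x hx; apply: (IHg x _).2; apply: List.in_or_app; right.
  rewrite (eq_map_In (s := hr) (g := fun x => v (Game gl gr) + v x)); last first.
    by move=> x hx; apply: (IHh x _).2; apply: List.in_or_app; right.
  by move: c; rewrite -!map_comp; apply.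
Qed.


Lemma negE l r : neg (Game l r) = Game (map neg r) (map neg l). Proof. by []. Qed.

Lemma neg_v g : vnum g -> vnum (neg g) /\ v (neg g) = - v g.
Proof.
elim/game_ind': g => l r IHl IHr vg.
have [e c] := vnumCl vg.
move: (vg); rewrite vnumE => /and3P [vl vr _].
rewrite negE; apply: Cl_v.
- apply/all_In => x /List.in_map_iff [y [<- hy]]; by case: (IHr y hy (all_vnum_In vr hy)).
- apply/all_In => x /List.in_map_iff [y [<- hy]]; by case: (IHl y hy (all_vnum_In vl hy)).
- rewrite -!map_comp.
  rewrite (eq_map_In (s := r) (g := fun x => - v x)); last first.
    by move=> x hx; apply: (IHr x hx (all_vnum_In vr hx)).2.
  rewrite (eq_map_In (s := l) (g := fun x => - v x)); last first.
    by move=> x hx; apply: (IHl x hx (all_vnum_In vl hx)).2.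
  by move: (ClN c); rewrite -!map_comp; apply.
Qed.

Lemma Cl00 : Cl 0 0 [::] [::].
Proof.
split => //; split => //; exists 0; by rewrite mul0r.
Qed.

Lemma zero_v : vnum zero /\ v zero = 0.
Proof.
exact: (@Cl_v [::] [::] 0 0%N _ _ Cl00).
Qed.

Lemma posint_v n : vnum (posint n) /\ v (posint n) = n%:R.
Proof.
elim: n => [|n [vn en]]; first exact: zero_v.
apply: (@Cl_v _ _ _ 0%N) => //=; first by rewrite vn.
rewrite en; split => //=.
- split => //; exists n.+1%:Z; by rewrite p20 mulr1.
- by rewrite andbT ltr_nat.
- rewrite xlS; last by apply/orP; right; rewrite ltr0n.
  rewrite /lcond /= orbF w0 -natr1; lra.
- by rewrite xrNone // ler0n.
Qed.

Lemma pinv2_step n : vnum (pinv2 n) -> v (pinv2 n) = w n ->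
  vnum (pinv2 n.+1) /\ v (pinv2 n.+1) = w n.+1.
Proof.
move=> vn en.
have c : Cl (w n.+1) n.+1 (map v [:: zero]) (map v [:: pinv2 n]).
  change (map v [:: zero]) with [:: v zero]; change (map v [:: pinv2 n]) with [:: v (pinv2 n)].
  rewrite en (proj2 zero_v); split.
  - split; first exact: dy_w.
    move=> _; exact: ndy_wS.
  - by rewrite /= andbT w_gt0.
  - by rewrite /= andbT w_lt.
  - by rewrite xlS //= subrr lexx.
  - by rewrite xrS //= orbF wS; lra.
have := Cl_v _ _ c; apply; rewrite /= ?vn ?andbT //; exact: (proj1 zero_v).
Qed.

Lemma pinv2_v n : vnum (pinv2 n) /\ v (pinv2 n) = w n.
Proof.
elim: n => [|n [vn en]]; last exact: pinv2_step.
by rewrite w0; have [] := posint_v 1.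
Qed.

Lemma gsum_v s : all vnum s -> vnum (gsum s) /\ v (gsum s) = \sum_(x <- s) v x.
Proof.
elim: s => [|a s IH]; first by rewrite big_nil => _; exact: zero_v.
change (gsum (a :: s)) with (add a (gsum s)); rewrite [all _ _]/=.
case/andP => va /IH [vs es].
have [h1 h2] := add_v va vs.
by split => //; rewrite h2 es big_cons.
Qed.

Lemma gsum_pinv2_v (f : nat -> nat) s :
  vnum (gsum [seq pinv2 (f i) | i <- s]) /\
  v (gsum [seq pinv2 (f i) | i <- s]) = \sum_(i <- s) w (f i).
Proof.
have al : all vnum [seq pinv2 (f i) | i <- s].
  by rewrite all_map; apply/allP => i _ /=; exact: (pinv2_v _).1.
have [h1 h2] := gsum_v al; split => //.
rewrite h2 big_map; apply: eq_bigr => i _; exact: (pinv2_v _).2.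
Qed.


Section MainSec.
Local Open Scope ring_scope.

Definition ssum (f : nat -> nat) j : rat := \sum_(i <- iota 1 j) w (f i).

Lemma ssumS f j : ssum f j.+1 = ssum f j + w (f j.+1).
Proof.
have E : iota 1 j.+1 = iota 1 j ++ [:: j.+1].
  by have := iotaD 1 j 1; rewrite addn1 add1n.
by rewrite /ssum E big_cat big_seq1.
Qed.
Lemma ssum0 f : ssum f 0 = 0. Proof. by rewrite /ssum big_nil. Qed.
Lemma ssum_ge0 f j : 0 <= ssum f j.
Proof. elim: j => [|j IH]; rewrite ?ssum0 ?ssumS //; have := w_gt0 (f j.+1); lra. Qed.

Lemma pp_v f i : vnum (partial_pinv f i) /\ v (partial_pinv f i) = ssum f i.-1.
Proof. exact: gsum_pinv2_v. Qed.

Lemma D_v b G P : vnum b -> vnum G -> vnum P ->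
  vnum (add (add b (neg G)) (neg P)) /\ v (add (add b (neg G)) (neg P)) = v b - v G - v P.
Proof.
move=> vb vG vP.
have [n1 e1] := neg_v vG; have [n2 e2] := neg_v vP.
have [n3 e3] := add_v vb n1.
have [n4 e4] := add_v n3 n2.
by split => //; rewrite e4 e3 e1 e2.
Qed.

Lemma pos_part (k : nat) (a b G : game) (alpha : nat -> nat) :
  vnum a -> vnum b -> G = Game [:: a] [:: b] -> forall e0, Cl (v G) e0 [:: v a] [:: v b] ->
  v b - v G <= 1 ->
  (forall i, (1 <= i <= k)%N -> [/\ (0 < alpha i)%N, w (alpha i) < v b - v G - ssum alpha i.-1
     & forall m, (0 < m)%N -> w m < v b - v G - ssum alpha i.-1 -> (alpha i <= m)%N]) ->
  forall j, (j <= k)%N -> [/\ vnum (osum G (posint j)), v (osum G (posint j)) = v G + ssum alpha j,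
     exists D, dy D (v G + ssum alpha j) /\ v b - (v G + ssum alpha j) <= w D,
     v a < v G + ssum alpha j & v G + ssum alpha j < v b].
Proof.
move=> va vb HG e0 c0 hle hyp.
have vG : vnum G by rewrite HG; have [] := Cl_v (l := [:: a]) (r := [:: b]) _ _ c0 => //=; rewrite ?va ?vb.
elim=> [|j IH] hj.
  rewrite ssum0 addr0.
  have [hD hA hB] := base_inv c0 hle.
  have -> : osum G (posint 0) = G by rewrite HG.
  by split.
have [vo eo [D [dD hD]] hA hB] := IH (ltnW hj).
have [_ hal hmin] := hyp j.+1 hj.
rewrite /= in hal hmin.
have hm : (0 < (alpha j.+1).-1)%N -> ~ (w (alpha j.+1).-1 < v b - (v G + ssum alpha j)).
  move=> hp hlt; have : w (alpha j.+1).-1 < v b - v G - ssum alpha j by lra.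
  move/(hmin _ hp); lia.
have [c dn bn An nB] := step hA hB dD hD (al := alpha j.+1) ltac:(lra) hm.
have oS : osum G (posint j.+1) = Game [:: a; osum G (posint j)] [:: b] by rewrite HG.
have c' : Cl (v G + ssum alpha j.+1) (alpha j.+1) (map v [:: a; osum G (posint j)]) (map v [:: b]).
  by change (map v [:: a; osum G (posint j)]) with [:: v a; v (osum G (posint j))];
     rewrite eo ssumS addrA.
have al1 : all vnum [:: a; osum G (posint j)] by rewrite /= va vo.
have al2 : all vnum [:: b] by rewrite /= vb.
have [vn en] := Cl_v al1 al2 c'.
rewrite oS ssumS addrA; split => //.
all: try by exists (alpha j.+1).
by rewrite en ssumS addrA.
Qed.

Lemma neg_part (k : nat) (a b G : game) (beta : nat -> nat) :
  vnum a -> vnum b -> G = Game [:: a] [:: b] -> forall e0, Cl (v G) e0 [:: v a] [:: v b] ->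
  v G - v a <= 1 ->
  (forall i, (1 <= i <= k)%N -> w (beta i) < v G - v a - ssum beta i.-1 /\
     (forall m, w m < v G - v a - ssum beta i.-1 -> (beta i <= m)%N)) ->
  forall j, (j <= k)%N -> [/\ vnum (osum G (negint j)), v (osum G (negint j)) = v G - ssum beta j,
     exists D, dy D (- v G + ssum beta j) /\ - v a - (- v G + ssum beta j) <= w D,
     - v b < - v G + ssum beta j & - v G + ssum beta j < - v a].
Proof.
move=> va vb HG e0 c0 hle hyp.
have c0N : Cl (- v G) e0 [:: - v b] [:: - v a] by exact: (ClN c0).
elim=> [|j IH] hj.
  rewrite ssum0 addr0 subr0.
  have [hD hA hB] := base_inv c0N ltac:(lra).
  have -> : osum G (negint 0) = G by rewrite HG.
  split => //; rewrite HG; have [] := Cl_v (l := [:: a]) (r := [:: b]) _ _ c0 => //=; rewrite ?va ?vb //.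
have [vo eo [D [dD hD]] hA hB] := IH (ltnW hj).
have [hal hmin] := hyp j.+1 hj.
rewrite /= in hal hmin.
have hm : (0 < (beta j.+1).-1)%N -> ~ (w (beta j.+1).-1 < - v a - (- v G + ssum beta j)).
  move=> hp hlt; have : w (beta j.+1).-1 < v G - v a - ssum beta j by lra.
  move/hmin; lia.
have [c dn bn An nB] := step hA hB dD hD (al := beta j.+1) ltac:(lra) hm.
have oS : osum G (negint j.+1) = Game [:: a] [:: b; osum G (negint j)] by rewrite HG.
have c' : Cl (v G - ssum beta j.+1) (beta j.+1) (map v [:: a]) (map v [:: b; osum G (negint j)]).
  change (map v [:: b; osum G (negint j)]) with [:: v b; v (osum G (negint j))].
  change (map v [:: a]) with [:: v a].
  apply: ClNE; rewrite eo /=.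
  have -> : - (v G - ssum beta j.+1) = - v G + ssum beta j + w (beta j.+1) by rewrite ssumS; ring.
  by have -> : - (v G - ssum beta j) = - v G + ssum beta j by ring.
have al1 : all vnum [:: a] by rewrite /= va.
have al2 : all vnum [:: b; osum G (negint j)] by rewrite /= vb vo.
have [vn en] := Cl_v al1 al2 c'.
have E : - v G + ssum beta j.+1 = - v G + ssum beta j + w (beta j.+1) by rewrite ssumS; ring.
rewrite oS E; split => //.
by exists (beta j.+1).
Qed.

End MainSec.


Close Scope ring_scope.
Theorem theorem4p2 (k : nat) (a b G : game) :
  0 < k ->
  is_number a -> is_number b -> is_number G ->
  G = Game [:: a] [:: b] ->
  (forall alpha : nat -> nat,
     gle (add b (neg G)) (posint 1) ->
     (forall i, 1 <= i <= k ->
        [/\ 0 < alpha i,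
            glt (pinv2 (alpha i)) (add (add b (neg G)) (neg (partial_pinv alpha i)))
          & forall m, 0 < m ->
              glt (pinv2 m) (add (add b (neg G)) (neg (partial_pinv alpha i))) ->
              alpha i <= m]) ->
     game_eq (osum G (posint k))
         (add G (gsum [seq pinv2 (alpha i) | i <- iota 1 k])))
  /\
  (forall beta : nat -> nat,
     gle (add G (neg a)) (posint 1) ->
     (forall i, 1 <= i <= k ->
        glt (pinv2 (beta i)) (add (add G (neg a)) (neg (partial_pinv beta i))) /\
        (forall m,
              glt (pinv2 m) (add (add G (neg a)) (neg (partial_pinv beta i))) ->
              beta i <= m)) ->
     game_eq (osum G (negint k))
         (add G (neg (gsum [seq pinv2 (beta i) | i <- iota 1 k])))).
Proof.
move=> kp na nb nG HG.
rewrite numE in na; rewrite numE in nb; rewrite numE in nG.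
have [e0 c0] : exists e, Cl (v G) e [:: v a] [:: v b].
  by move: (nG); rewrite {1}HG => /vnumCl [e c]; exists e; rewrite HG; exact c.
have [np1 ep1] := posint_v 1.
have pv m := proj1 (pinv2_v m).
have pe m := proj2 (pinv2_v m).
split.
- move=> alpha hle hyp.
  have [nnG enG] := neg_v nG.
  have [n1 e1] := add_v nb nnG.
  have hle' : (v b - v G <= 1)%R.
    by move: hle; rewrite gle_v // e1 enG ep1.
  have hyp' : forall i, (1 <= i <= k)%N -> [/\ (0 < alpha i)%N,
       (w (alpha i) < v b - v G - ssum alpha i.-1)%R
     & forall m, (0 < m)%N -> (w m < v b - v G - ssum alpha i.-1)%R -> (alpha i <= m)%N].
    move=> i hi; have [h1 h2 h3] := hyp i hi.
    have [np npe] := pp_v alpha i.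
    have [nD eD] := D_v nb nG np.
    move: h2; rewrite glt_v // pe eD npe => h2.
    split => // m mp hm; apply: h3 => //; rewrite glt_v // pe eD npe //.
  have [vo eo _ _ _] := pos_part na nb HG c0 hle' hyp' (leqnn k).
  have [ns es] := gsum_pinv2_v alpha (iota 1 k).
  have [nadd eadd] := add_v nG ns.
  by rewrite geq_v // eo eadd es.
- move=> beta hle hyp.
  have [nna ena] := neg_v na.
  have [n1 e1] := add_v nG nna.
  have hle' : (v G - v a <= 1)%R.
    by move: hle; rewrite gle_v // e1 ena ep1.
  have hyp' : forall i, (1 <= i <= k)%N -> (w (beta i) < v G - v a - ssum beta i.-1)%R /\
     (forall m, (w m < v G - v a - ssum beta i.-1)%R -> (beta i <= m)%N).
    move=> i hi; have [h2 h3] := hyp i hi.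
    have [np npe] := pp_v beta i.
    have [nD eD] := D_v nG na np.
    move: h2; rewrite glt_v // pe eD npe => h2.
    split => // m hm; apply: h3 => //; rewrite glt_v // pe eD npe //.
  have [vo eo _ _ _] := neg_part na nb HG c0 hle' hyp' (leqnn k).
  have [ns es] := gsum_pinv2_v beta (iota 1 k).
  have [nns ens] := neg_v ns.
  have [nadd eadd] := add_v nG nns.
  by rewrite geq_v // eo eadd ens es.
Qed.
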